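(* Let $m\ge 1$, $q=2^m$, and let $n$ be odd. Let \[L(x)=\sum_{i=0}^{m-1}L_i\big(x^{2^i}\big),\] where each $L_i$ is a $q$-linear polynomial over $\mathbb F_{q^n}$. Then $\mathrm{Tr}(x^{q+1})+L(x)$ is a permutation polynomial of $\mathbb F_{q^n}$ if and only if all three of the following hold: $L_i(1)\in\mathbb F_q$ for $0\le i<m$; the polynomial \[\ell(x)=\sum_{i=0}^{m-1}(L_i(1)x)^{2^{m-i}}+x^{2^{m-1}}\] is a permutation polynomial of $\mathbb F_q$; and $\ker\mathrm{Tr}\cap\ker L^\prime=\{0\}$.
   Context: $\mathrm{Tr}$ denotes the trace map of $\mathbb F_{q^n}$ over $\mathbb F_q$, $\mathrm{Tr}(x)=\sum_{j=0}^{n-1}x^{q^j}$. Polynomials are regarded as maps on $\mathbb F_{q^n}$. A $q$-linear polynomial over $\mathbb F_{q^n}$ is one of the form $\sum_{j=0}^{n-1}a_jx^{q^j}$ with $a_j\in\mathbb F_{q^n}$; a $2$-linear polynomial is one of the form $\sum_{j=0}^{mn-1}a_jx^{2^j}$. For a $2$-linear polynomial $L(x)=\sum_{j=0}^{mn-1}a_jx^{2^j}$, its adjoint is $L^\prime(x)=\sum_{j=0}^{mn-1}(a_jx)^{2^{-j}}$, where $y\mapsto y^{2^{-j}}$ denotes the inverse of the automorphism $y\mapsto y^{2^j}$ of $\mathbb F_{q^n}$; equivalently $L'$ is the unique map with $\mathrm{T}(\alpha L(\beta))=\mathrm{T}(L^\prime(\alpha)\beta)$ for all $\alpha,\beta\in\mathbb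 F_{q^n}$, where $\mathrm T$ is the absolute trace of $\mathbb F_{q^n}$ over $\mathbb F_2$. $\ker$ denotes the kernel of an additive map on $\mathbb F_{q^n}$. *)

(* Defs.v *)
From HB Require Import structures.
From mathcomp Require Import all_boot all_order all_algebra all_field.
Set Implicit Arguments. Unset Strict Implicit. Unset Printing Implicit Defensive.
Import GRing.Theory.
Local Open Scope ring_scope.

Section Defs.
Variable F : finFieldType.

Definition trq (q n : nat) (x : F) : F := \sum_(j < n) x ^+ (q ^ j).

Definition qlin (q n : nat) (a : 'I_n -> F) (x : F) : F :=
  \sum_(j < n) a j * x ^+ (q ^ j).

Definition Lmap (m n : nat) (a : 'I_m -> 'I_n -> F) (x : F) : F :=
  \sum_(i < m) qlin (2 ^ m) (a i) (x ^+ (2 ^ i)).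

(* Inverse of the automorphism y |-> y^(2^k) of F = F_{2^(m n)}, for k <= m n:
   y |-> y^(2^(m n - k)). *)
Definition frobinv (m n k : nat) (y : F) : F := y ^+ (2 ^ (m * n - k)).

(* Adjoint of L, written as the 2-linear polynomial
   L(x) = sum_{i<m, j<n} a_{i j} x^(2^(i + m j)), so
   L'(x) = sum_{i,j} (a_{i j} x)^(2^-(i + m j)). *)
Definition Ladj (m n : nat) (a : 'I_m -> 'I_n -> F) (x : F) : F :=
  \sum_(i < m) \sum_(j < n) frobinv m n (i + m * j) (a i j * x).

Definition inFq (m : nat) (x : F) : bool := x ^+ (2 ^ m) == x.

Definition ell (m n : nat) (a : 'I_m -> 'I_n -> F) (x : F) : F :=
  \sum_(i < m) (qlin (2 ^ m) (a i) 1 * x) ^+ (2 ^ (m - i)) + x ^+ (2 ^ (m - 1)).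

Definition perm_on_set (S : pred F) (f : F -> F) : Prop :=
  {in S, forall x, f x \in S} /\ {in S &, injective f}.

End Defs.

(* Main.v *)
Require Import Defs.
From mathcomp Require Import all_boot all_order all_algebra all_field.
From mathcomp Require Import zify ring.
Set Implicit Arguments. Unset Strict Implicit. Unset Printing Implicit Defensive.
Import GRing.Theory.
Local Open Scope ring_scope.

Section Basics.
Variable F : finFieldType.
Variables m n : nat.
Hypothesis hm : (1 <= m)%N.
Hypothesis hn : odd n.
Hypothesis hF : #|F| = (2 ^ (m * n))%N.

Lemma char2 : (2%:R : F) = 0.
Proof. by case/andP: (card_finPcharP hF (isT : prime 2)) => _ /eqP. Qed.

Lemma addxx (x : F) : x + x = 0.
Proof. by rewrite -mulr2n -mulr_natr char2 mulr0. Qed.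

Lemma oppE (x : F) : - x = x.
Proof. by rewrite -[-x]add0r -(addxx x) addrK. Qed.

Lemma add_eq0 (x y : F) : (x + y == 0) = (x == y).
Proof. by rewrite -[y]oppE subr_eq0 oppE. Qed.

Lemma sqrD (x y : F) : (x + y) ^+ 2 = x ^+ 2 + y ^+ 2.
Proof. by rewrite sqrrD mulr2n addxx addr0. Qed.

Lemma frobD k (x y : F) : (x + y) ^+ (2 ^ k) = x ^+ (2 ^ k) + y ^+ (2 ^ k).
Proof.
elim: k => [|k IH]; first by rewrite !expn0 !expr1.
by rewrite expnSr !exprM IH sqrD.
Qed.

Lemma frob0 k : (0 : F) ^+ (2 ^ k) = 0.
Proof. by rewrite expr0n expn_eq0. Qed.

Lemma frob_sum k (I : Type) (r : seq I) (P : pred I) (G : I -> F) :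
  (\sum_(i <- r | P i) G i) ^+ (2 ^ k) = \sum_(i <- r | P i) (G i) ^+ (2 ^ k).
Proof. exact: (big_morph (fun x : F => x ^+ (2 ^ k)) (frobD k) (frob0 k)). Qed.

Lemma frobN (x : F) : x ^+ (2 ^ (m * n)) = x.
Proof. by rewrite -hF expf_card. Qed.

Lemma fix_pow b (c : F) j : c ^+ b = c -> c ^+ (b ^ j) = c.
Proof.
move=> hc; elim: j => [|j IH]; first by rewrite expn0 expr1.
by rewrite expnS exprM hc IH.
Qed.

Lemma cyc_sum b K (x : F) : x ^+ (b ^ K) = x ->
  \sum_(j < K) (x ^+ b) ^+ (b ^ j) = \sum_(j < K) x ^+ (b ^ j).
Proof.
case: K => [|K] hx; first by rewrite !big_ord0.
rewrite big_ord_recr big_ord_recl /=.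
under eq_bigr => j _ do rewrite -exprM -expnS.
by rewrite -exprM -expnS hx expn0 expr1 addrC.
Qed.


Lemma few_roots K (c : 'I_K -> F) (e : 'I_K -> nat) d (S : {set F}) k0 :
  injective e -> (forall k, (e k <= d)%N) -> c k0 != 0 ->
  (forall x, x \in S -> \sum_(k < K) c k * x ^+ (e k) = 0) -> (#|S| <= d)%N.
Proof.
move=> ie ed ck0 hS.
pose p : {poly F} := \sum_(k < K) c k *: 'X^(e k).
have pc : p`_(e k0) = c k0.
  rewrite /p coef_sum (bigD1 k0) //= coefZ coefXn eqxx mulr1 big1 ?addr0 //.
  by move=> k hk; rewrite coefZ coefXn (inj_eq ie) eq_sym (negbTE hk) mulr0.
have p0 : p != 0 by apply: contraNneq ck0 => p0; rewrite -pc p0 coef0.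
have sp : (size p <= d.+1)%N.
  rewrite /p; apply: (leq_trans (size_sum _ _ _)); apply/bigmax_leqP => k _.
  by apply: (leq_trans (size_scale_leq _ _)); rewrite size_polyXn ltnS.
have hr : all (root p) (enum S).
  apply/allP => x; rewrite mem_enum => xS.
  rewrite /root /p horner_sum; under eq_bigr do rewrite hornerZ hornerXn.
  by rewrite hS.
have := max_poly_roots p0 hr (enum_uniq _).
rewrite -cardE => h; rewrite -ltnS; exact: leq_trans h sp.
Qed.

Lemma KI (g : F -> F) : (forall x y, g (x + y) = g x + g y) ->
  (#|[set g x | x in F]| * #|[set x | g x == 0%R]|)%N = #|F|.
Proof.
move=> gD.
have g0 : g 0 = 0.
  have := gD 0 0; rewrite addr0 => h; apply: (addrI (g 0)); by rewrite -h addr0.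
rewrite -[RHS]sum1_card (partition_big g (mem [set g x | x in F])) /=; last first.
  by move=> x _; apply: imset_f.
rewrite -sum_nat_const; apply: eq_bigr => j; rewrite unfold_in => /imsetP [x0 _ ->].
have -> : \sum_(i in F | g i == g x0) 1 = #|[set i | g i == g x0]|.
  by rewrite -sum1_card; apply: eq_bigl => i; rewrite !inE.
have -> : [set i | g i == g x0] = [set z + x0 | z in [set x | g x == 0]].
  apply/setP => i; rewrite inE; apply/eqP/imsetP.
    move=> hi; exists (i - x0); last by rewrite subrK.
    by rewrite inE gD oppE hi addxx.
  by move=> [z]; rewrite inE => /eqP hz ->; rewrite gD hz add0r.
by rewrite card_imset //; exact: addIr.
Qed.

Definition sgn (z : F) : int := if z == 0 then 1 else -1.

Lemma bal (S : {set F}) (h : F -> F) w0 :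
  (forall u v, u \in S -> v \in S -> u + v \in S) -> w0 \in S ->
  (forall u v, h (u + v) = h u + h v) -> (forall u, h u = 0 \/ h u = 1) ->
  h w0 = 1 -> \sum_(w in S) sgn (h w) = 0.
Proof.
move=> Sc w0S hD h01 hw0.
have e : \sum_(w in S) sgn (h w) = - \sum_(w in S) sgn (h w).
  rewrite {1}(reindex_inj (addIr w0)) /= -sumrN.
  apply: eq_big => w.
    apply/idP/idP => hw; last exact: Sc.
    by have := Sc _ _ hw w0S; rewrite -addrA addxx addr0.
  move=> _; rewrite hD hw0; case: (h01 w) => ->; rewrite /sgn.
    by rewrite add0r oner_eq0 eqxx.
  by rewrite addxx eqxx oner_eq0 opprK.
lia.
Qed.


Lemma Npos : (0 < m * n)%N.
Proof. by rewrite muln_gt0 hm; case: n hn. Qed.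

Definition T (x : F) := \sum_(k < m * n) x ^+ (2 ^ k).

Lemma TD x y : T (x + y) = T x + T y.
Proof. by rewrite /T -big_split; apply: eq_bigr => k _; rewrite frobD. Qed.

Lemma T0 : T 0 = 0.
Proof. by rewrite /T big1 // => k _; rewrite frob0. Qed.

Lemma T_sum (I : Type) (r : seq I) (P : pred I) (G : I -> F) :
  T (\sum_(i <- r | P i) G i) = \sum_(i <- r | P i) T (G i).
Proof. exact: (big_morph T TD T0). Qed.

Lemma Tsq x : T (x ^+ 2) = T x.
Proof. by rewrite /T -(cyc_sum (frobN x)). Qed.

Lemma Tfrob k x : T (x ^+ (2 ^ k)) = T x.
Proof.
elim: k => [|k IH]; first by rewrite expn0 expr1.
by rewrite expnSr exprM Tsq IH.
Qed.

Lemma T01 x : T x = 0 \/ T x = 1.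
Proof.
have h : T x ^+ 2 = T x.
  rewrite -[2%N]/(2 ^ 1)%N /T frob_sum -[RHS]Tsq /T.
  by apply: eq_bigr => k _; rewrite exprAC.
have : T x * (T x - 1) = 0 by rewrite mulrBr mulr1 -expr2 h subrr.
by move/eqP; rewrite mulf_eq0 subr_eq0 => /orP [/eqP|/eqP]; [left|right].
Qed.

Lemma Tnz : exists z, T z != 0.
Proof.
apply/existsP; apply: contraT; rewrite negb_exists => /forallP hall.
have k0 : 'I_(m * n) := Ordinal Npos.
have := @few_roots (m * n) (fun _ => 1) (fun k => 2 ^ k)%N (2 ^ (m * n).-1)%N
  [set: F] k0.
case/(_ _ _ (oner_neq0 _) _)/Wrap.
- by move=> k1 k2 /expnI h; apply: val_inj; apply: h.
- by move=> k; rewrite leq_pexp2l // -ltnS prednK ?Npos.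
- move=> x _; have := hall x; rewrite negbK => /eqP h; rewrite -[RHS]h /T.
  by apply: eq_bigr => k _; rewrite mul1r.
by rewrite cardsT hF leqNgt ltn_exp2l // prednK ?Npos // leqnn.
Qed.


Lemma Tnd x : x != 0 -> exists y, T (x * y) != 0.
Proof. by move=> x0; case: Tnz => z hz; exists (x^-1 * z); rewrite mulVKf. Qed.

Lemma Tval1 z : T z != 0 -> T z = 1.
Proof. by case: (T01 z) => ->; rewrite ?eqxx. Qed.

Lemma perp_card (W : {set F}) : 0 \in W ->
  (forall u v, u \in W -> v \in W -> u + v \in W) ->
  (#|W| * #|[set al : F | [forall w in W, T (al * w)%R == 0%R]]|)%N = #|F|.
Proof.
move=> W0 Wc; set P := [set al | _].
have E1 : \sum_(al : F) \sum_(w in W) sgn (T (al * w)) = (#|W| * #|P|)%N%:Z.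
  rewrite (eq_bigr (fun al => if al \in P then (#|W|%:Z) else 0)); last first.
    move=> al _; case: ifP => hal.
      rewrite (eq_bigr (fun _ => 1)) ?sumr_const ?natz // => w hw.
      by move: hal; rewrite inE => /forall_inP /(_ w hw) /eqP ->; rewrite /sgn eqxx.
    move: hal; rewrite inE => /negbT; rewrite negb_forall_in => /exists_inP [w0 hw0 hT].
    apply: (bal Wc hw0 (h := fun w => T (al * w))) => //.
    - by move=> u v; rewrite mulrDr TD.
    - by move=> u; apply: T01.
    - exact: Tval1.
  by rewrite -big_mkcond sumr_const -[RHS]natz natrM mulr_natr natz.
have E2 : \sum_(al : F) \sum_(w in W) sgn (T (al * w)) = #|F|%:Z.
  rewrite exchange_big (bigD1 0) //= [X in _ + X]big1; last first.
    move=> w /andP [hw w0].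
    have [y hy] := Tnd w0.
    transitivity (\sum_(al in [set: F]) sgn (T (al * w))).
      by apply: eq_bigl => al; rewrite in_setT.
    apply: (bal (h := fun al => T (al * w)) (w0 := y)) => //.
    - by move=> *; rewrite inE.
    - by move=> u v; rewrite mulrDl TD.
    - by move=> u; apply: T01.
    - by rewrite mulrC; apply: Tval1.
  rewrite addr0 (eq_bigr (fun _ => 1)); last by move=> al _; rewrite mulr0 T0 /sgn eqxx.
  by rewrite sumr_const natz.
by apply/eqP; rewrite -eqz_nat -E1 E2.
Qed.


Lemma rank_eq (phi psi : F -> F) :
  (forall x y, phi (x + y) = phi x + phi y) ->
  (forall al be, T (al * phi be) = T (psi al * be)) ->
  #|[set x | phi x == 0]| = #|[set x | psi x == 0]|.
Proof.
move=> pD adj.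
have p0 : phi 0 = 0.
  have := pD 0 0; rewrite addr0 => h; apply: (addrI (phi 0)); by rewrite -h addr0.
set W := [set phi x | x in F].
have W0 : 0 \in W by rewrite -p0; apply: imset_f.
have Wc : forall u v, u \in W -> v \in W -> u + v \in W.
  by move=> u v /imsetP [x _ ->] /imsetP [y _ ->]; rewrite -pD; apply: imset_f.
have E : [set x | psi x == 0] = [set al : F | [forall w in W, T (al * w)%R == 0%R]].
  apply/setP => al; rewrite !inE; apply/eqP/forall_inP.
    by move=> h w /imsetP [be _ ->]; rewrite adj h mul0r T0.
  move=> h; apply/eqP; apply: contraT => hn0.
  have [y hy] := Tnd hn0.
  have hW : phi y \in W by apply: imset_f.
  by have := h _ hW; rewrite adj (negbTE hy).
have := perp_card W0 Wc; rewrite -E -(KI pD) => /eqP.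
rewrite eqn_pmul2l; first by move/eqP.
by apply/card_gt0P; exists 0.
Qed.

Lemma dual_inj (U : {set F}) (tau phi psi : F -> F) :
  tau 0 = 0 -> (forall a, a \in U -> phi a \in U) ->
  (forall c, c \in U -> c != 0 -> exists2 y, y \in U & tau (c * y) != 0) ->
  (forall a c, a \in U -> c \in U -> tau (c * phi a) = tau (psi c * a)) ->
  {in U &, injective phi} ->
  forall c, c \in U -> psi c = 0 -> c = 0.
Proof.
move=> t0 pU nd adj inj c cU pc; apply/eqP; apply: contraT => c0.
have [y yU hy] := nd c cU c0.
have hsub : (phi @: U) \subset U.
  apply/subsetP => z /imsetP [a aU ->]. by apply: pU.
have : phi @: U == U.
  by rewrite eqEcard hsub /= card_in_imset.
move/eqP => hE; move: yU; rewrite -hE => /imsetP [a aU ya].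
by move: hy; rewrite ya adj // pc mul0r t0 eqxx.
Qed.

End Basics.

Section Main.
Variable F : finFieldType.
Variables m n : nat.
Hypothesis hm : (1 <= m)%N.
Hypothesis hn : odd n.
Hypothesis hF : #|F| = (2 ^ (m * n))%N.

Local Notation q := (2 ^ m)%N.
Local Notation Tr := (@trq F q n).
Definition Fqs := [set x : F | x ^+ q == x].

Lemma n_gt0 : (0 < n)%N. Proof. by case: n hn. Qed.
Lemma q_gt1 : (1 < q)%N. Proof. by rewrite -{1}(expn0 2) ltn_exp2l. Qed.

Lemma qexp j : (q ^ j = 2 ^ (m * j))%N. Proof. by rewrite -expnM. Qed.
Lemma qn : (q ^ n = 2 ^ (m * n))%N. Proof. exact: qexp. Qed.
Lemma qsplit : (q ^ n = q * q ^ n.-1)%N.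
Proof. by rewrite -expnS prednK // n_gt0. Qed.

Lemma xqn (x : F) : x ^+ (q ^ n) = x. Proof. by rewrite qn (frobN hF). Qed.

Lemma frobqD j (x y : F) : (x + y) ^+ (q ^ j) = x ^+ (q ^ j) + y ^+ (q ^ j).
Proof. by rewrite qexp (frobD hF). Qed.

Lemma inFqE x : (x \in Fqs) = (x ^+ q == x). Proof. by rewrite inE. Qed.

Lemma Fq_pow x j : x \in Fqs -> x ^+ (q ^ j) = x.
Proof. by rewrite inFqE => /eqP; apply: fix_pow. Qed.

Lemma Fq0 : (0 : F) \in Fqs. Proof. by rewrite inFqE frob0. Qed.
Lemma Fq1 : (1 : F) \in Fqs. Proof. by rewrite inFqE expr1n. Qed.
Lemma FqD x y : x \in Fqs -> y \in Fqs -> x + y \in Fqs.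
Proof. by rewrite !inFqE (frobD hF) => /eqP -> /eqP ->. Qed.
Lemma FqM x y : x \in Fqs -> y \in Fqs -> x * y \in Fqs.
Proof. by rewrite !inFqE exprMn => /eqP -> /eqP ->. Qed.
Lemma FqV x : x \in Fqs -> x^-1 \in Fqs.
Proof. by rewrite !inFqE exprVn => /eqP ->. Qed.
Lemma Fq_frob k x : x \in Fqs -> x ^+ (2 ^ k) \in Fqs.
Proof. by rewrite !inFqE exprAC => /eqP ->. Qed.
Lemma Fq_sum (I : Type) (r : seq I) (P : pred I) (G : I -> F) :
  (forall i, P i -> G i \in Fqs) -> \sum_(i <- r | P i) G i \in Fqs.
Proof. by move=> h; apply: (big_ind (fun x => x \in Fqs)) => //; [exact: Fq0 | exact: FqD]. Qed.

Lemma TrD x y : Tr (x + y) = Tr x + Tr y.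
Proof. by rewrite /trq -big_split; apply: eq_bigr => j _; rewrite frobqD. Qed.

Lemma Tr0 : Tr 0 = 0.
Proof. by rewrite /trq big1 // => j _; rewrite qexp frob0. Qed.

Lemma Trq x : Tr (x ^+ q) = Tr x.
Proof. by rewrite /trq (cyc_sum (xqn x)). Qed.

Lemma Trqk k x : Tr (x ^+ (q ^ k)) = Tr x.
Proof.
elim: k => [|k IH]; first by rewrite expn0 expr1.
by rewrite expnSr exprM Trq IH.
Qed.

Lemma Tr_Fq x : Tr x \in Fqs.
Proof.
rewrite inFqE; apply/eqP; rewrite -[RHS]Trq /trq (frob_sum hF).
by apply: eq_bigr => j _; rewrite exprAC.
Qed.

Lemma Tr_c c : c \in Fqs -> Tr c = c.
Proof.
move=> hc; rewrite /trq (eq_bigr (fun _ => c)); last by move=> j _; rewrite Fq_pow.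
rewrite sumr_const card_ord.
rewrite -[n in c *+ n](odd_double_half n) hn mulrnDr mulr1n -muln2 mulnC mulrnA mulr2n (addxx hF) mul0rn addr0.
by [].
Qed.

Lemma kerTr_le : (#|[set x : F | Tr x == 0%R]| <= q ^ n.-1)%N.
Proof.
have k0 : 'I_n := Ordinal n_gt0.
apply: (@few_roots _ n (fun _ => 1) (fun j => q ^ j)%N _ _ k0).
- by move=> j1 j2 /(expnI q_gt1) h; apply: val_inj.
- by move=> j; rewrite leq_pexp2l ?expn_gt0 // -ltnS prednK ?n_gt0.
- exact: oner_neq0.
- move=> x; rewrite inE => /eqP h; rewrite -[RHS]h /trq.
  by apply: eq_bigr => j _; rewrite mul1r.
Qed.

Lemma Fq_le : (#|Fqs| <= q)%N.
Proof.
pose p : {poly F} := 'X^q - 'X.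
have sp : size p = q.+1.
  by rewrite /p size_addl ?size_polyXn // size_polyN size_polyX ltnS q_gt1.
have p0 : p != 0 by rewrite -size_poly_eq0 sp.
have hr : all (root p) (enum Fqs).
  apply/allP => x; rewrite mem_enum inFqE => /eqP hx.
  by rewrite /root /p !hornerE hx subrr.
by have := max_poly_roots p0 hr (enum_uniq _); rewrite -cardE sp.
Qed.

Lemma Tr_counts : [/\ #|Fqs| = q, #|[set x : F | Tr x == 0%R]| = (q ^ n.-1)%N
  & forall c, c \in Fqs -> exists x, Tr x = c].
Proof.
have hK := KI hF (@TrD).
have hsub : [set Tr x | x in F] \subset Fqs.
  by apply/subsetP => y /imsetP [x _ ->]; apply: Tr_Fq.
have h1 := subset_leq_card hsub.
have h2 := kerTr_le; have h3 := Fq_le.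
rewrite hF -qn qsplit in hK.
have hq : (0 < q ^ n.-1)%N by rewrite !expn_gt0.
have [e1 e2 e3] : [/\ #|[set Tr x | x in F]| = q,
   #|[set x : F | Tr x == 0%R]| = (q ^ n.-1)%N & #|Fqs| = q].
  have hq0 : (0 < q)%N by rewrite expn_gt0.
  move: hK h1 h2 h3 hq hq0.
  move: q (q ^ n.-1)%N #|Fqs| #|[set x : F | Tr x == 0%R]| #|[set Tr x | x in F]|.
  move=> Q R C B A hAB hAC hBR hCQ hR hQ.
  have hQA : (Q <= A)%N.
    by rewrite -(leq_pmul2r hR) -hAB leq_mul2l hBR orbT.
  have eA : A = Q by apply/eqP; rewrite eqn_leq hQA (leq_trans hAC hCQ).
  split => //; last by lia.
  by apply/eqP; rewrite -(eqn_pmul2l hQ) -{1}eA hAB.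
split => // c hc.
have : [set Tr x | x in F] == Fqs by rewrite eqEcard hsub e1 e3 leqnn.
move/eqP => hE; move: hc; rewrite -hE => /imsetP [x _ ->]; by exists x.
Qed.



Variable a : 'I_m -> 'I_n -> F.
Local Notation L := (Lmap a).
Definition li (i : 'I_m) := qlin q (a i) 1.
Definition ff (x : F) := Tr (x ^+ (q + 1)) + L x.
Definition dd (x : F) := x ^+ (q ^ n.-1) + x ^+ q.

Lemma LD x y : L (x + y) = L x + L y.
Proof.
rewrite /Lmap -big_split; apply: eq_bigr => i _.
rewrite /qlin -big_split; apply: eq_bigr => j _.
by rewrite (frobD hF) frobqD mulrDr.
Qed.

Lemma L_Fq x : x \in Fqs -> L x = \sum_(i < m) li i * x ^+ (2 ^ i).
Proof.
move=> hx; rewrite /Lmap; apply: eq_bigr => i _.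
rewrite /li /qlin mulr_suml; apply: eq_bigr => j _.
by rewrite expr1n mulr1 Fq_pow // Fq_frob.
Qed.

Lemma dd_Fq x : x \in Fqs -> dd x = 0.
Proof. by move=> hx; have := hx; rewrite inFqE => /eqP e; rewrite /dd Fq_pow // e (addxx hF). Qed.

Lemma qn_odd : (q ^ n = (q ^ 2) ^ n./2 * q)%N.
Proof.
move: q => Q.
rewrite -expnM -expnSr; congr (_ ^ _)%N.
by rewrite -[LHS](odd_double_half n) hn mulnC muln2 add1n.
Qed.

Lemma dd_nz x : x \notin Fqs -> dd x != 0.
Proof.
move=> hx; apply: contra hx; rewrite /dd (add_eq0 hF) => /eqP h.
have h2 : x ^+ (q ^ 2) = x by rewrite -[RHS]xqn qsplit mulnC exprM h -exprM mulnn.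
rewrite inFqE; apply/eqP.
by rewrite -{2}(xqn x) qn_odd exprM (fix_pow _ h2).
Qed.

Lemma Tr_swap x y : Tr (x ^+ q * y) = Tr (x * y ^+ (q ^ n.-1)).
Proof.
by rewrite -[RHS]Trq exprMn -exprM -expnSr prednK ?n_gt0 // xqn.
Qed.

Lemma ff_diff x y :
  ff (x + y) = ff x + Tr (x * dd y) + (Tr (y ^+ (q + 1)) + L y).
Proof.
rewrite /ff /dd LD addn1 !exprSr (frobD hF) mulrDr !mulrDl !TrD.
rewrite (Tr_swap x y) mulrDr TrD (mulrC (y ^+ q) x).
ring.
Qed.

Lemma Tr_sq x : x \in Fqs -> Tr (x ^+ (q + 1)) = x ^+ 2.
Proof.
move=> hx; have := hx; rewrite inFqE => /eqP e.
by rewrite addn1 exprSr e -expr2 Tr_c // expr2 FqM.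
Qed.

Definition condA := forall x, L x \in Fqs -> x \in Fqs.
Definition condB := forall x, x \in Fqs -> x ^+ 2 + L x = 0 -> x = 0.

Lemma inj_iff : injective ff <-> condA /\ condB.
Proof.
split.
- move=> inj; split.
  + move=> x hLx; apply: contraT => hx.
    have [_ _ surj] := Tr_counts.
    have hc : Tr (x ^+ (q + 1)) + L x \in Fqs by apply: FqD => //; apply: Tr_Fq.
    have [y hy] := surj _ hc.
    have e : ff (y / dd x + x) = ff (y / dd x).
      by rewrite ff_diff divfK ?dd_nz // hy -addrA (addxx hF) addr0.
    have hx0 : x = 0 by apply: (addrI (y / dd x)); rewrite addr0; exact: inj _ _ e.
    by rewrite hx0 Fq0 in hx.
  + move=> x hx h0.
    have := ff_diff 0 x; rewrite mul0r Tr0 add0r Tr_sq // h0 !addr0.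
    by move/inj.
- move=> [hA hB] x y e.
  have e2 := ff_diff x (x + y); rewrite addrA (addxx hF) add0r -e -addrA in e2.
  rewrite -{1}[ff x]addr0 in e2; have := addrI _ e2 => /esym/eqP; rewrite addrA (add_eq0 hF) => /eqP E.
  case: (boolP (x + y \in Fqs)) => hz.
  + move: E; rewrite dd_Fq // mulr0 Tr0 add0r Tr_sq // => /esym E.
    by apply/eqP; rewrite -(add_eq0 hF); apply/eqP; apply: hB => //; rewrite E (addxx hF).
  + have : L (x + y) \in Fqs by rewrite -E; apply: FqD; apply: Tr_Fq.
    by move/hA; rewrite (negbTE hz).
Qed.

Definition cond1 := forall i, li i \in Fqs.
Definition cond1' := forall x, x \in Fqs -> L x \in Fqs.

Lemma m_lt : (2 ^ (m - 1) < q)%N.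
Proof. by rewrite ltn_exp2l // subn1 prednK. Qed.

Lemma cond1_iff : cond1 <-> cond1'.
Proof.
split.
- move=> h x hx; rewrite L_Fq //; apply: Fq_sum => i _.
  by apply: FqM; [apply: h | apply: Fq_frob].
- move=> h i; apply: contraT => hi.
  have := @few_roots _ m (fun i => li i ^+ q - li i) (fun i => 2 ^ i)%N (2 ^ (m - 1))%N Fqs i.
  case/(_ _ _ _ _)/Wrap.
  + by move=> k1 k2 /expnI h2; apply: val_inj; apply: h2.
  + by move=> k; rewrite leq_pexp2l // subn1 -ltnS prednK.
  + by rewrite subr_eq0; rewrite inFqE in hi.
  + move=> x hx; have := h x hx; rewrite inFqE => /eqP e.
    rewrite (eq_bigr (fun i => li i ^+ q * x ^+ (2 ^ i) - li i * x ^+ (2 ^ i))); last first.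
      by move=> k _; rewrite mulrBl.
    have eq : \sum_(i < m) li i ^+ q * x ^+ (2 ^ i) = (L x) ^+ q.
      rewrite L_Fq // (frob_sum hF); apply: eq_bigr => k _; rewrite exprMn; congr (_ * _).
      by have := Fq_frob k hx; rewrite inFqE => /eqP.
    by rewrite sumrB -L_Fq // eq e subrr.
  have [-> _ _] := Tr_counts; by rewrite leqNgt m_lt.
Qed.

Definition tt (y : F) := \sum_(k < m) y ^+ (2 ^ k).

Lemma ttD x y : tt (x + y) = tt x + tt y.
Proof. by rewrite /tt -big_split; apply: eq_bigr => k _; rewrite (frobD hF). Qed.

Lemma tt0 : tt 0 = 0.
Proof. by rewrite /tt big1 // => k _; rewrite frob0. Qed.

Lemma tt_sum (I : Type) (r : seq I) (P : pred I) (G : I -> F) :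
  tt (\sum_(i <- r | P i) G i) = \sum_(i <- r | P i) tt (G i).
Proof. exact: (big_morph tt ttD tt0). Qed.

Lemma tt_frob k y : y \in Fqs -> tt (y ^+ (2 ^ k)) = tt y.
Proof.
elim: k y => [|k IH] y hy; first by rewrite expn0 expr1.
rewrite expnS exprM IH; last by rewrite -[2%N]/(2 ^ 1)%N Fq_frob.
by rewrite /tt (cyc_sum (K := m)) //; apply/eqP; rewrite -inFqE.
Qed.

Lemma tt_nd c : c \in Fqs -> c != 0 -> exists2 y, y \in Fqs & tt (c * y) != 0.
Proof.
move=> hc c0.
have [z hz tz] : exists2 z, z \in Fqs & tt z != 0.
  apply/exists_inP; apply: contraT; rewrite negb_exists_in => /forall_inP hall.
  have k0 : 'I_m := Ordinal hm.
  have := @few_roots _ m (fun _ => 1) (fun k => 2 ^ k)%N (2 ^ (m - 1))%N Fqs k0.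
  case/(_ _ _ (oner_neq0 _) _)/Wrap.
  + by move=> k1 k2 /expnI h2; apply: val_inj; apply: h2.
  + by move=> k; rewrite leq_pexp2l // subn1 -ltnS prednK.
  + move=> x hx; have := hall x hx; rewrite negbK => /eqP e; rewrite -[RHS]e /tt.
    by apply: eq_bigr => k _; rewrite mul1r.
  have [-> _ _] := Tr_counts; by rewrite leqNgt m_lt.
exists (c^-1 * z); first by apply: FqM => //; apply: FqV.
by rewrite mulVKf.
Qed.

Definition Mf (x : F) := x ^+ 2 + \sum_(i < m) li i * x ^+ (2 ^ i).

Lemma MfD x y : Mf (x + y) = Mf x + Mf y.
Proof.
rewrite /Mf (sqrD hF).
rewrite (eq_bigr (fun i => li i * x ^+ (2 ^ i) + li i * y ^+ (2 ^ i))) ?big_split /=; last first.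
  by move=> i _; rewrite (frobD hF) mulrDr.
ring.
Qed.

Lemma ellD x y : ell a (x + y) = ell a x + ell a y.
Proof.
rewrite /ell (frobD hF).
rewrite (eq_bigr (fun i : 'I_m => (qlin q (a i) 1 * x) ^+ (2 ^ (m - i)) +
   (qlin q (a i) 1 * y) ^+ (2 ^ (m - i)))) ?big_split /=; last first.
  by move=> i _; rewrite mulrDr (frobD hF).
ring.
Qed.

Lemma Mf_Fq x : cond1 -> x \in Fqs -> Mf x \in Fqs.
Proof.
move=> h1 hx; apply: FqD; first by rewrite -[2%N]/(2 ^ 1)%N Fq_frob.
by apply: Fq_sum => i _; apply: FqM; [apply: h1 | apply: Fq_frob].
Qed.

Lemma ell_Fq x : cond1 -> x \in Fqs -> ell a x \in Fqs.
Proof.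
move=> h1 hx; apply: FqD; last by apply: Fq_frob.
by apply: Fq_sum => i _; apply: Fq_frob; apply: FqM => //; apply: h1.
Qed.

Lemma adj_t x c : cond1 -> x \in Fqs -> c \in Fqs -> tt (c * Mf x) = tt (ell a c * x).
Proof.
move=> h1 hx hc.
have hxq : x ^+ q = x by apply/eqP; rewrite -inFqE.
have hx2 : x ^+ 2 \in Fqs by rewrite -[2%N]/(2 ^ 1)%N Fq_frob.
rewrite /Mf /ell mulrDr ttD mulrDl ttD mulr_sumr mulr_suml !tt_sum addrC.
congr (_ + _); last first.
  rewrite -(tt_frob (m - 1) (FqM hc hx2)) exprMn -exprM.
  by rewrite -expnS subn1 prednK // hxq.
apply: eq_bigr => i _.
have hi : c * (li i * x ^+ (2 ^ i)) \in Fqs.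
  by apply: FqM => //; apply: FqM; [apply: h1 | apply: Fq_frob].
rewrite -(tt_frob (m - i) hi) mulrA exprMn -exprM -expnD subnKC ?hxq.
  by rewrite (mulrC c).
exact: ltnW.
Qed.

Lemma inFq_mem x : (x \in inFq m) = (x \in Fqs).
Proof. by rewrite inFqE unfold_in. Qed.

Lemma cond2_iff : cond1 -> (perm_on_set (inFq m) (ell a) <-> condB).
Proof.
move=> h1.
have condBE : condB <-> (forall x, x \in Fqs -> Mf x = 0 -> x = 0).
  by split=> h x hx; [rewrite /Mf -L_Fq //; apply: h | move=> e; apply: h => //; rewrite /Mf -L_Fq].
rewrite condBE; split.
- move=> [_ hinj].
  have hd := @dual_inj _ Fqs tt (ell a) Mf tt0 (fun x hx => ell_Fq h1 hx) tt_nd.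
  apply: hd.
  + by move=> x c hx hc; rewrite mulrC -adj_t // mulrC.
  + by move=> x y hx hy; apply: hinj; rewrite inFq_mem.
- move=> hB.
  have hinjM : {in Fqs &, injective Mf}.
    move=> x y hx hy e; apply/eqP; rewrite -(add_eq0 hF); apply/eqP.
    by apply: hB; [apply: FqD | rewrite MfD e (addxx hF)].
  have hd := @dual_inj _ Fqs tt Mf (ell a) tt0 (fun x hx => Mf_Fq h1 hx) tt_nd
    (fun x c hx hc => adj_t h1 hx hc) hinjM.
  split.
  + by move=> x; rewrite !inFq_mem; apply: ell_Fq.
  + move=> x y; rewrite !inFq_mem => hx hy e; apply/eqP; rewrite -(add_eq0 hF); apply/eqP.
    by apply: hd; [apply: FqD | rewrite ellD e (addxx hF)].
Qed.

Local Notation TT := (T m n).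

Lemma adjL g b : TT (g * L b) = TT (Ladj a g * b).
Proof.
rewrite /Lmap /Ladj mulr_sumr mulr_suml !(T_sum hF); apply: eq_bigr => i _.
rewrite /qlin mulr_sumr mulr_suml !(T_sum hF); apply: eq_bigr => j _.
have hk : (i + m * j <= m * n)%N.
  have := ltn_ord i; have := ltn_ord j; nia.
rewrite /frobinv -exprM qexp -expnD.
rewrite -(Tfrob hF (m * n - (i + m * j))) !exprMn -exprM -expnD subnKC // (frobN hF).
congr (T _ _ _); ring.
Qed.

Definition phi x := (L x) ^+ q + L x.
Definition pit (x : F) := x ^+ (q ^ n.-1) + x.
Definition psi x := Ladj a (pit x).

Lemma TT_q (al y : F) : TT (al * y ^+ q) = TT (al ^+ (q ^ n.-1) * y).
Proof.
rewrite -(Tfrob hF (m * n.-1)) -qexp exprMn -exprM -expnS prednK ?n_gt0 //.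
by rewrite xqn.
Qed.

Lemma phi_adj (al be : F) : TT (al * phi be) = TT (psi al * be).
Proof. by rewrite /phi /psi mulrDr (TD hF) TT_q -(TD hF) -mulrDl adjL. Qed.

Lemma phiD x y : phi (x + y) = phi x + phi y.
Proof. rewrite /phi LD (frobD hF); ring. Qed.

Lemma pitD x y : pit (x + y) = pit x + pit y.
Proof. rewrite /pit frobqD; ring. Qed.

Lemma Ladj0 : Ladj a 0 = 0.
Proof.
rewrite /Ladj big1 // => i _; rewrite big1 // => j _.
by rewrite mulr0 /frobinv frob0.
Qed.

Lemma kerphi x : (phi x == 0) = (L x \in Fqs).
Proof. by rewrite /phi (add_eq0 hF) inFqE. Qed.

Lemma kerpit x : (pit x == 0) = (x \in Fqs).
Proof.
rewrite /pit (add_eq0 hF) inFqE; apply/eqP/eqP => h.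
  by rewrite -h -exprM mulnC -qsplit xqn.
exact: fix_pow.
Qed.

Definition Pset := [set x | phi x == 0].
Definition Kpsi := [set x | psi x == 0].

Lemma P_Kpsi : #|Pset| = #|Kpsi|.
Proof. exact: (rank_eq hm hn hF phiD phi_adj). Qed.

Lemma P_ge : (q <= #|Pset|)%N.
Proof.
have hK := KI hF phiD.
have [_ hker _] := Tr_counts.
have hsub : [set phi x | x in F] \subset [set x : F | Tr x == 0%R].
  apply/subsetP => y /imsetP [x _ ->]; rewrite inE /phi TrD Trq (addxx hF) //.
have h1 := subset_leq_card hsub; rewrite hker in h1.
rewrite hF -qn qsplit in hK.
have hR : (0 < q ^ n.-1)%N by rewrite !expn_gt0.
rewrite -(leq_pmul2l hR) -[X in (X <= _)%N]mulnC /Pset -hK.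
by rewrite leq_mul2r h1 orbT.
Qed.

Lemma pit_onto x : Tr x = 0 -> exists g, pit g = x.
Proof.
move=> hx.
have [hq hker _] := Tr_counts.
have hK := KI hF pitD.
have hsub : [set pit g | g in F] \subset [set x : F | Tr x == 0%R].
  apply/subsetP => y /imsetP [g _ ->]; rewrite inE /pit TrD Trqk (addxx hF) //.
have eK : [set g | pit g == 0] = Fqs by apply/setP => g; rewrite inE kerpit.
rewrite eK hq hF -qn qsplit mulnC in hK.
have hq0 : (0 < q)%N by rewrite expn_gt0.
have e1 : #|[set pit g | g in F]| = (q ^ n.-1)%N by apply/eqP; rewrite -(eqn_pmul2l hq0) hK.
have : [set pit g | g in F] == [set x : F | Tr x == 0%R].
  by rewrite eqEcard hsub e1 hker leqnn.
move/eqP => hE; have : x \in [set x : F | Tr x == 0%R] by rewrite inE hx.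
by rewrite -hE => /imsetP [g _ ->]; exists g.
Qed.

Definition cond3 := forall x : F, Tr x = 0 -> Ladj a x = 0 -> x = 0.

Lemma A_to_3 : condA -> cond3.
Proof.
move=> hA x hx hL; apply/eqP; apply: contraT => x0.
have [hq _ _] := Tr_counts.
have hsub : Pset \subset Fqs by apply/subsetP => y; rewrite inE kerphi; apply: hA.
have hP : #|Pset| = q by apply/eqP; rewrite eqn_leq P_ge -hq subset_leq_card.
have [g hg] := pit_onto hx.
have gF : g \notin Fqs by rewrite -kerpit hg.
have hsub2 : g |: Fqs \subset Kpsi.
  apply/subsetP => y; rewrite in_setU1 => /orP [/eqP -> | hy]; rewrite inE /psi.
    by rewrite hg hL.
  by move: hy; rewrite -kerpit => /eqP ->; rewrite Ladj0.
have := subset_leq_card hsub2; rewrite cardsU1 gF hq -P_Kpsi hP /=.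
by rewrite add1n ltnn.
Qed.

Lemma A_from_3 : cond1' -> cond3 -> condA.
Proof.
move=> h1 h3 x hx; apply: contraT => xF.
have [hq _ _] := Tr_counts.
have hsub : x |: Fqs \subset Pset.
  apply/subsetP => y; rewrite in_setU1 => /orP [/eqP -> | hy]; rewrite inE kerphi //.
  exact: h1.
have := subset_leq_card hsub; rewrite cardsU1 xF hq P_Kpsi /= add1n => hlt.
have : ~~ (Kpsi \subset Fqs).
  by apply/negP => /subset_leq_card; rewrite hq leqNgt hlt.
case/subsetPn => g; rewrite inE => /eqP hg gF.
have : pit g = 0 by apply: h3; [rewrite /pit TrD Trqk (addxx hF) | exact: hg].
by move/eqP; rewrite kerpit (negbTE gF).
Qed.

Lemma A_to_1' : condA -> cond1'.
Proof.
move=> hA x hx.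
have [hq _ _] := Tr_counts.
have hsub : Pset \subset Fqs by apply/subsetP => y; rewrite inE kerphi; apply: hA.
have : Pset == Fqs by rewrite eqEcard hsub hq P_ge.
move/eqP => hE; have : x \in Pset by rewrite hE.
by rewrite inE kerphi.
Qed.

Lemma main_sec : bijective ff <-> [/\ cond1, perm_on_set (inFq m) (ell a) & cond3].
Proof.
split.
- move=> hb; have hi : injective ff := bij_inj hb.
  have [hA hB] := inj_iff.1 hi.
  have h1 := cond1_iff.2 (A_to_1' hA).
  split => //; [exact: (cond2_iff h1).2 hB | exact: A_to_3 hA].
- move=> [h1 h2 h3]; apply: injF_bij; apply/inj_iff; split.
    exact: A_from_3 (cond1_iff.1 h1) h3.
  exact: (cond2_iff h1).1 h2.
Qed.

End Main.

Theorem mainTheorem1 (F : finFieldType) (m n : nat)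
    (hm : (1 <= m)%N) (hn : odd n) (hF : #|F| = (2 ^ (m * n))%N)
    (a : 'I_m -> 'I_n -> F) :
  bijective (fun x : F => trq (2 ^ m) n (x ^+ (2 ^ m + 1)) + Lmap a x)
  <->
  [/\ (forall i : 'I_m, inFq m (qlin (2 ^ m) (a i) 1)),
      perm_on_set (inFq m) (ell a)
    & (forall x : F, trq (2 ^ m) n x = 0 -> Ladj a x = 0 -> x = 0)].
Proof.
have [H1 H2] := main_sec hm hn hF a.
split.
- move=> hb; have [h1 h2 h3] := H1 hb; split => // i.
  by have := h1 i; rewrite inFqE.
- move=> [h1 h2 h3]; apply: H2; split => // i.
  by rewrite /li inFqE; exact: h1 i.
Qed.
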